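(* Let $\mathcal S$ be a Garside family in a left-cancellative category $\mathcal C$, and let $\mathcal S'$ be a subfamily of $\mathcal S^\sharp$ such that $\mathcal S'(\mathcal S'\cap\mathcal C^\times)\subseteq\mathcal S'$ and every element of $\mathcal S'^{\,2}$ admits an $\mathcal S$-normal decomposition all of whose entries lie in $\mathcal S'$. Then every element of the subcategory of $\mathcal C$ generated by $\mathcal S'$ admits an $\mathcal S$-normal decomposition all of whose entries lie in $\mathcal S'$.
   Context: A category is left-cancellative if $fg=fg'\Rightarrow g=g'$. $\mathcal C^\times$ is the family of invertible elements; $\mathcal S^\sharp=\mathcal S\mathcal C^\times\cup\mathcal C^\times$; $\mathcal S'^{\,2}$ is the family of products $s_1s_2$ with $s_1,s_2\in\mathcal S'$, and $\mathcal S'(\mathcal S'\cap\mathcal C^\times)$ the family of products $s\epsilon$ with $s\in\mathcal S'$, $\epsilon\in\mathcal S'\cap\mathcal C^\times$. $f\preccurlyeq g$ means $g=fg'$ for some $g'$. A length-two path $(g_1,g_2)$ is $\mathcal S$-greedy if for all $s\in\mathcal S$ and $f\in\mathcal C$ with $fg_1$ defined, $s\preccurlyeq fg_1g_2$ implies $s\preccurlyeq fg_1$; a path is $\mathcal S$-greedy if all its length-two subpaths are. A path is $\mathcal S$-normal if it is $\mathcal S$-greedy with all entries in $\mathcal S^\sharp$. An $\mathcal S$-normal decomposition of $g$ is an $\mathcal S$-normal path whose product is $g$. $\mathcal S$ is a Garside family in $\mathcal C$ if every element of $\mathcal C$ admits an $\mathcal S$-normal decomposition. *)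

(* Defs.v *)
From Stdlib Require Import List.
Import ListNotations.
Set Implicit Arguments.

(* A category presented by its family of elements (morphisms) with source,
   target, identities and a composition [comp f g] written "fg" in the paper
   (f first, then g); [comp f g] is meaningful only when [tgt f = src g]. *)
Record Category := {
  Ob : Type;
  Mor : Type;
  src : Mor -> Ob;
  tgt : Mor -> Ob;
  idm : Ob -> Mor;
  comp : Mor -> Mor -> Mor;
  src_id : forall x, src (idm x) = x;
  tgt_id : forall x, tgt (idm x) = x;
  src_comp : forall f g, tgt f = src g -> src (comp f g) = src f;
  tgt_comp : forall f g, tgt f = src g -> tgt (comp f g) = tgt g;
  id_l : forall f, comp (idm (src f)) f = f;
  id_r : forall f, comp f (idm (tgt f)) = f;
  assoc : forall f g h, tgt f = src g -> tgt g = src h ->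
            comp (comp f g) h = comp f (comp g h)
}.

Arguments src {c} _.
Arguments tgt {c} _.
Arguments idm {c} _.
Arguments comp {c} _ _.

Section Defs.
Variable C : Category.

Definition left_cancellative : Prop :=
  forall f g g' : Mor C, tgt f = src g -> tgt f = src g' ->
    comp f g = comp f g' -> g = g'.

Definition invertible (f : Mor C) : Prop :=
  exists g, tgt f = src g /\ tgt g = src f /\
    comp f g = idm (src f) /\ comp g f = idm (tgt f).

Definition sharp (S : Mor C -> Prop) (g : Mor C) : Prop :=
  (exists s e, S s /\ invertible e /\ tgt s = src e /\ g = comp s e)
  \/ invertible g.

Definition prefix (f g : Mor C) : Prop :=
  exists g', tgt f = src g' /\ g = comp f g'.

Definition greedy2 (S : Mor C -> Prop) (g1 g2 : Mor C) : Prop :=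
  forall s f, S s -> tgt f = src g1 ->
    prefix s (comp (comp f g1) g2) -> prefix s (comp f g1).

Fixpoint is_path (x : Ob C) (l : list (Mor C)) : Prop :=
  match l with
  | [] => True
  | a :: l' => src a = x /\ is_path (tgt a) l'
  end.

Fixpoint prod (x : Ob C) (l : list (Mor C)) : Mor C :=
  match l with
  | [] => idm x
  | a :: l' => comp a (prod (tgt a) l')
  end.

Fixpoint greedy (S : Mor C -> Prop) (l : list (Mor C)) : Prop :=
  match l with
  | a :: ((b :: _) as l') => greedy2 S a b /\ greedy S l'
  | _ => True
  end.

Definition normal (S : Mor C -> Prop) (l : list (Mor C)) : Prop :=
  greedy S l /\ Forall (sharp S) l.

Definition normal_decomp (S : Mor C -> Prop) (g : Mor C) (l : list (Mor C)) : Prop :=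
  is_path (src g) l /\ prod (src g) l = g /\ normal S l.

Definition Garside_family (S : Mor C -> Prop) : Prop :=
  forall g : Mor C, exists l, normal_decomp S g l.

Inductive generated (S' : Mor C -> Prop) : Mor C -> Prop :=
| gen_id : forall x, generated S' (idm x)
| gen_in : forall s, S' s -> generated S' s
| gen_comp : forall f g, tgt f = src g -> generated S' f -> generated S' g ->
    generated S' (comp f g).

End Defs.

(* Main.v *)
Require Import Defs.
From Stdlib Require Import List.
Import ListNotations.

Ltac obj := solve [ repeat (first [ rewrite src_comp by obj | rewrite tgt_comp by obj
                                  | rewrite src_id | rewrite tgt_id ]); congruence ].

Lemma src_prod (C : Category) x l : is_path C x l -> src (prod C x l) = x.
Proof.
  revert x; induction l as [|a l IH]; intros x H; simpl in *.
  - apply src_id.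
  - destruct H as [H1 H2]. rewrite src_comp; [assumption|]. rewrite IH; auto.
Qed.

Lemma prefix_trans (C : Category) s a b :
  prefix C s a -> tgt a = src b -> prefix C s (comp a b).
Proof.
  intros [c [H1 H2]] H. subst a. exists (comp c b). split.
  - rewrite src_comp; [assumption|]. rewrite tgt_comp in H by assumption. assumption.
  - apply assoc; auto. rewrite tgt_comp in H by assumption. assumption.
Qed.

Lemma chain (C : Category) (S : Mor C -> Prop) u1 l :
  greedy C S (u1 :: l) -> is_path C (tgt u1) l ->
  forall sg f, S sg -> tgt f = src u1 ->
  prefix C sg (comp f (comp u1 (prod C (tgt u1) l))) -> prefix C sg (comp f u1).
Proof.
  revert u1; induction l as [|u2 l IH]; intros u1 Hg Hp sg f HS Hf Hpre; simpl in *.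
  - rewrite id_r in Hpre. exact Hpre.
  - destruct Hg as [Hg12 Hg]. destruct Hp as [Hs2 Hp].
    apply Hg12; auto.
    apply (IH u2 Hg Hp sg (comp f u1) HS). obj.
    pose proof (src_prod _ _ _ Hp) as HP.
    rewrite assoc; auto. obj.
Qed.

Lemma rinv_inv (C : Category) (LC : left_cancellative C) a b :
  tgt a = src b -> comp a b = idm (src a) -> invertible C a /\ invertible C b.
Proof.
  intros H1 H2.
  assert (Htb : tgt b = src a).
  { rewrite <- (tgt_comp C a b H1). rewrite H2. apply tgt_id. }
  assert (H3 : comp b a = idm (tgt a)).
  { apply (LC a). obj. apply eq_sym, src_id.
    rewrite <- assoc; auto. rewrite H2, id_l, id_r. reflexivity. }
  split.
  - exists b. repeat split; auto.
  - exists a. repeat split; auto. rewrite H3, H1; reflexivity. rewrite H2, Htb; reflexivity.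
Qed.

Lemma inv_split (C : Category) (LC : left_cancellative C) a b :
  tgt a = src b -> invertible C (comp a b) -> invertible C a /\ invertible C b.
Proof.
  intros H [c [H1 [H2 [H3 H4]]]].
  rewrite tgt_comp in H1 by auto. rewrite src_comp in H2 by auto.
  rewrite src_comp in H3 by auto. rewrite tgt_comp in H4 by auto.
  split.
  - apply (rinv_inv C LC a (comp b c)). obj.
    rewrite <- assoc; auto.
  - apply (rinv_inv C LC b (comp c a)). obj.
    apply (LC a). obj. obj.
    rewrite <- (assoc C a b (comp c a)); auto. 2: obj.
    rewrite <- (assoc C (comp a b) c a); auto. 2: obj.
    rewrite H3, id_l, <- H, id_r. reflexivity.
Qed.

Lemma prod_inv (C : Category) (LC : left_cancellative C) x l :
  is_path C x l -> invertible C (prod C x l) -> Forall (invertible C) l.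
Proof.
  revert x; induction l as [|a l IH]; intros x Hp Hi; simpl in *; constructor.
  - destruct Hp as [H1 H2]. apply (inv_split C LC a (prod C (tgt a) l)); auto.
    rewrite src_prod; auto.
  - destruct Hp as [H1 H2]. apply (IH (tgt a)); auto.
    apply (inv_split C LC a (prod C (tgt a) l)); auto. rewrite src_prod; auto.
Qed.

Lemma closure (C : Category) (S' : Mor C -> Prop)
  (Hcl : forall s e, S' s -> S' e -> invertible C e -> tgt s = src e -> S' (comp s e)) :
  forall w x, S' x -> Forall (fun e => S' e /\ invertible C e) w -> is_path C (tgt x) w ->
  S' (comp x (prod C (tgt x) w)).
Proof.
  induction w as [|e w IH]; intros x Hx Hw Hp; simpl in *.
  - rewrite id_r; auto.
  - inversion Hw as [|? ? [He1 He2] Hw']; subst. destruct Hp as [Hp1 Hp2].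
    pose proof (src_prod _ _ _ Hp2).
    rewrite <- assoc; auto.
    assert (Ht : tgt e = tgt (comp x e)) by obj.
    rewrite Ht in *. apply IH; auto.
Qed.

Lemma lemK (C : Category) (S : Mor C -> Prop) (LC : left_cancellative C) g h f u1 U2 :
  sharp C S g -> greedy C S (u1 :: U2) -> is_path C (tgt u1) U2 ->
  tgt f = src u1 -> tgt g = src h ->
  comp f (comp u1 (prod C (tgt u1) U2)) = comp g h ->
  exists z, tgt g = src z /\ tgt z = tgt u1 /\ comp f u1 = comp g z /\
            h = comp z (prod C (tgt u1) U2).
Proof.
  intros Hg Hgr Hp Hf Hgh E.
  set (Y := prod C (tgt u1) U2) in *.
  assert (HY : src Y = tgt u1) by (apply src_prod; auto).
  assert (Hsrc : src f = src g).
  { rewrite <- (src_comp C f (comp u1 Y)) by obj. rewrite E. obj. }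
  assert (E' : comp (comp f u1) Y = comp g h) by (rewrite assoc; auto).
  destruct Hg as [[sg [e [HS [[e' [He1 [He2 [He3 He4]]]] [Hse Hg]]]]] | [g' [H1 [H2 [H3 H4]]]]].
  - subst g. rewrite tgt_comp in Hgh by auto.
    assert (Hpre : prefix C sg (comp f u1)).
    { apply (chain C S u1 U2 Hgr Hp sg f HS Hf). fold Y. rewrite E.
      exists (comp e h). split. obj. apply assoc; auto. }
    destruct Hpre as [y [Hy Hfy]].
    assert (Hty : tgt y = tgt u1).
    { rewrite <- (tgt_comp C sg y Hy). rewrite <- Hfy. obj. }
    assert (Eh : comp e h = comp y Y).
    { apply (LC sg). obj. obj.
      rewrite <- (assoc C sg y Y); auto. rewrite <- Hfy. rewrite E'.
      symmetry; apply assoc; auto. congruence. }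
    exists (comp e' y). repeat split.
    + obj.
    + obj.
    + rewrite Hfy. rewrite assoc; auto. 2: obj. f_equal.
      rewrite <- assoc; auto. 2: obj. rewrite He3. rewrite <- Hse, Hy. apply eq_sym, id_l.
    + rewrite assoc; auto. 2: obj. rewrite <- Eh. rewrite <- assoc; auto. 2: obj.
      rewrite He4. rewrite Hgh. apply eq_sym, id_l.
  - exists (comp g' (comp f u1)). repeat split.
    + obj.
    + obj.
    + rewrite <- assoc; auto. 2: obj. rewrite H3, <- Hsrc.
      rewrite <- (src_comp C f u1) by auto. apply eq_sym, id_l.
    + rewrite assoc; auto. 2: obj. 2: obj. rewrite E'. rewrite <- assoc; auto.
      rewrite H4, Hgh. apply eq_sym, id_l.
Qed.

Lemma greedy_tail (C : Category) S a l : greedy C S (a :: l) -> greedy C S l.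
Proof. destruct l; simpl; tauto. Qed.

Lemma lemL (C : Category) (S S' : Mor C -> Prop) (LC : left_cancellative C)
  (Hsh : forall s, S' s -> sharp C S s)
  (Hcl : forall s e, S' s -> S' e -> invertible C e -> tgt s = src e -> S' (comp s e))
  (H3 : forall s1 s2, S' s1 -> S' s2 -> tgt s1 = src s2 ->
     exists l, normal_decomp C S (comp s1 s2) l /\ Forall S' l) :
  forall l y, is_path C y l -> greedy C S l -> Forall S' l ->
  forall s, S' s -> tgt s = y ->
  exists V, is_path C (src s) V /\ prod C (src s) V = comp s (prod C y l) /\
            greedy C S V /\ Forall S' V.
Proof.
  induction l as [|t1 l2 IH]; intros y Hp Hg HF s Hs Hsy.
  - exists [s]. simpl. subst y. repeat split; auto.
  - simpl in Hp. destruct Hp as [Ht1' Hp2].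
    assert (Ht1 : src t1 = tgt s) by congruence. subst y. simpl.
    inversion HF as [|? ? HSt1 HF2]; subst.
    set (P := prod C (tgt t1) l2).
    assert (HP : src P = tgt t1) by (apply src_prod; auto).
    destruct (H3 s t1 Hs HSt1 (eq_sym Ht1)) as [U [[HUp [HUe [HUg HUsh]]] HUF]].
    rewrite src_comp in HUp, HUe by auto.
    destruct U as [|u1 [|u2 U']]; simpl in HUp, HUe.
    +
      assert (Hst : src s = tgt t1).
      { rewrite <- (tgt_comp C s t1) by auto. rewrite <- HUe. symmetry; apply tgt_id. }
      exists l2. rewrite Hst. repeat split; auto.
      * fold P. rewrite <- assoc; auto. rewrite <- HUe. rewrite Hst, <- HP. apply eq_sym, id_l.
      * apply greedy_tail in Hg; auto.
    + destruct HUp as [Hu1 _]. rewrite id_r in HUe.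
      exists (u1 :: l2). simpl. repeat split; auto.
      * rewrite HUe. rewrite tgt_comp by auto. auto.
      * rewrite HUe. rewrite tgt_comp by auto. fold P. apply assoc; auto.
      * destruct l2 as [|t2 l3]; simpl; auto. simpl in Hg. destruct Hg as [Hg12 Hg].
        split; auto. intros sg f HS Hf Hpre. rewrite HUe in *.
        rewrite <- (assoc C f s t1) by obj. apply Hg12; [auto|obj|].
        rewrite (assoc C f s t1) by obj. exact Hpre.
      * inversion HUF; subst; auto.
    + destruct HUp as [Hu1 [Hu2 HUp']].
      set (Z := prod C (tgt u2) U') in *.
      assert (HZ : src Z = tgt u2) by (apply src_prod; auto).
      set (m := comp u2 Z).
      assert (Hm : src m = tgt u1) by (unfold m; obj).
      assert (Htu1 : tgt m = tgt t1).
      { rewrite <- (tgt_comp C u1 m) by auto. unfold m. rewrite HUe. obj. }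
      destruct (lemK C S LC s t1 (idm (src s)) u1 (u2 :: U') (Hsh s Hs) HUg) as
        [z [Hz1 [Hz2 [Hz3 Hz4]]]]; simpl; auto.
      { obj. }
      { fold Z. rewrite HUe. rewrite <- (src_comp C s t1) at 1 by auto. apply id_l. }
      simpl in Hz4. fold Z m in Hz4.
      assert (HSF : Forall S' (u2 :: U')) by (inversion HUF; auto).
      destruct (lemK C S LC t1 (idm (tgt t1)) z u2 U' (Hsh t1 HSt1) (greedy_tail _ _ _ _ HUg)
                  HUp') as [z' [Hz'1 [Hz'2 [Hz'3 Hz'4]]]].
      { congruence. }
      { symmetry; apply src_id. }
      { rewrite id_r. fold Z. symmetry; exact Hz4. }
      fold Z in Hz'4.
      destruct (rinv_inv C LC z' Z) as [_ HZi]. congruence. rewrite <- Hz'1. auto.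
      assert (HUi : Forall (invertible C) U') by (apply (prod_inv C LC (tgt u2)); auto).
      assert (HmS : S' m).
      { unfold m, Z. inversion HSF as [|? ? HS2 HSF']; subst.
        apply closure; auto. clear - HSF' HUi. induction U'; auto.
        inversion HSF'; inversion HUi; subst. constructor; auto. }
      destruct (IH (tgt t1) Hp2 (greedy_tail _ _ _ _ Hg) HF2 m HmS Htu1) as
        [V [HVp [HVe [HVg HVF]]]].
      rewrite Hm in HVp, HVe. fold P in HVe.
      assert (HE : comp u1 m = comp s t1) by exact HUe.
      exists (u1 :: V). simpl. repeat split; auto.
      * rewrite HVe. rewrite <- assoc; auto. 2: obj. rewrite HE. apply assoc; auto.
      * destruct V as [|v1 V']; simpl; auto. split; auto.
        intros sg f HS Hf Hpre.
        apply (chain C S u1 (u2 :: U') HUg (conj Hu2 HUp') sg f HS Hf).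
        simpl. fold Z m. rewrite HE.
        rewrite <- (assoc C f s t1) by obj.
        apply (chain C S t1 l2 Hg Hp2 sg (comp f s) HS). obj.
        fold P. simpl in HVe. destruct HVp as [Hv1 HVp'].
        set (Q := prod C (tgt v1) V') in *.
        assert (HQ : src Q = tgt v1) by (apply src_prod; auto).
        assert (Hmt : tgt u1 = src m) by congruence.
        assert (HmP : src (comp m P) = tgt u1) by (rewrite <- HVe; obj).
        assert (Hst : tgt s = src t1) by congruence.
        pose proof (prefix_trans C _ _ Q Hpre) as H.
        rewrite (assoc C (comp f u1) v1 Q) in H by obj.
        rewrite HVe in H.
        rewrite (assoc C f u1 (comp m P)) in H by congruence.
        rewrite <- (assoc C u1 m P) in H by congruence.
        rewrite HE in H.
        rewrite (assoc C s t1 P) in H by congruence.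
        rewrite <- (assoc C f s (comp t1 P)) in H by obj.
        apply H. obj.
      * constructor; auto. inversion HUF; auto.
Qed.

Lemma lemM (C : Category) (S S' : Mor C -> Prop) (LC : left_cancellative C)
  (Hsh : forall s, S' s -> sharp C S s)
  (Hcl : forall s e, S' s -> S' e -> invertible C e -> tgt s = src e -> S' (comp s e))
  (H3 : forall s1 s2, S' s1 -> S' s2 -> tgt s1 = src s2 ->
     exists l, normal_decomp C S (comp s1 s2) l /\ Forall S' l) :
  forall X x, is_path C x X -> greedy C S X -> Forall S' X ->
  forall g V, is_path C (src g) V -> prod C (src g) V = g -> greedy C S V -> Forall S' V ->
  src g = tgt (prod C x X) ->
  exists W, is_path C x W /\ prod C x W = comp (prod C x X) g /\ greedy C S W /\ Forall S' W.
Proof.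
  induction X as [|x1 X' IH]; intros x Hp Hg HF g V HVp HVe HVg HVF Hsrc; simpl in *.
  - rewrite tgt_id in Hsrc. exists V. rewrite Hsrc in *. repeat split; auto.
    rewrite HVe, <- Hsrc. symmetry; apply id_l.
  - destruct Hp as [Hx1 Hp']. inversion HF as [|? ? HS1 HF']; subst.
    pose proof (src_prod _ _ _ Hp') as HPX.
    rewrite tgt_comp in Hsrc by congruence.
    destruct (IH (tgt x1) Hp' (greedy_tail _ _ _ _ Hg) HF' g V HVp HVe HVg HVF Hsrc)
      as [W' [HW'p [HW'e [HW'g HW'F]]]].
    destruct (lemL C S S' LC Hsh Hcl H3 W' (tgt x1) HW'p HW'g HW'F x1 HS1 eq_refl)
      as [W [HWp [HWe [HWg HWF]]]].
    exists W. repeat split; auto.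
    rewrite HWe, HW'e. symmetry; apply assoc; congruence.
Qed.

Theorem mainTheorem12 (C : Category) (S S' : Mor C -> Prop) :
  left_cancellative C ->
  Garside_family C S ->
  (forall s, S' s -> sharp C S s) ->
  (forall s e, S' s -> S' e -> invertible C e -> tgt s = src e -> S' (comp s e)) ->
  (forall s1 s2, S' s1 -> S' s2 -> tgt s1 = src s2 ->
     exists l, normal_decomp C S (comp s1 s2) l /\ Forall S' l) ->
  forall g, generated C S' g ->
    exists l, normal_decomp C S g l /\ Forall S' l.
Proof.
  intros LC _ Hsh Hcl H3 g Hgen.
  induction Hgen as [x|s Hs|f g Hfg _ IHf _ IHg].
  - exists []. unfold normal_decomp, normal. simpl. rewrite src_id. repeat split; auto.
  - exists [s]. unfold normal_decomp, normal. simpl. repeat split; auto.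
    apply id_r.
  - destruct IHf as [Vf [[Hfp [Hfe [Hfg' Hfs]]] HfF]].
    destruct IHg as [Vg [[Hgp [Hge [Hgg Hgs]]] HgF]].
    destruct (lemM C S S' LC Hsh Hcl H3 Vf (src f) Hfp Hfg' HfF g Vg Hgp Hge Hgg HgF)
      as [W [HWp [HWe [HWg HWF]]]].
    { rewrite Hfe. auto. }
    exists W. unfold normal_decomp, normal. rewrite src_comp by auto.
    rewrite HWe, Hfe. repeat split; auto.
    clear - Hsh HWF. induction HWF; constructor; auto.
Qed.
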